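(* Let $(X,\mathsf{d}_X)$ be a compact metric space and $\mathfrak{A}$ a unital C*-algebra, let $\mu$ be a state of $C(X,\mathfrak{A})$, let $q\in\{C(X),\mathbb{C},\mu\}$, and let $\|\cdot\|_{\mathsf{n}}$ be a norm on $\mathfrak{A}$ (over $\mathbb{R}$ or $\mathbb{C}$) equivalent to the C*-norm $\|\cdot\|_{\mathfrak{A}}$. Then $\mathsf{L}^{(\mathsf{n}),q}_{\mathsf{d}_X}$ is lower semi-continuous with respect to $\|\cdot\|_{C(X,\mathfrak{A})}$, the set $\{a\in C(X,\mathfrak{A}):\mathsf{L}^{(\mathsf{n}),q}_{\mathsf{d}_X}(a)<\infty\}$ is dense in $C(X,\mathfrak{A})$, and the set $\{a\in C(X,\mathfrak{A}): a=a^*,\ \mathsf{L}^{(\mathsf{n}),q}_{\mathsf{d}_X}(a)<\infty\}$ is dense in the self-adjoint part of $C(X,\mathfrak{A})$.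
   Context: $C(X,\mathfrak{A})$ is the unital C*-algebra of continuous $\mathfrak{A}$-valued functions on $X$ with pointwise operations, supremum norm, and unit the constant $1_{\mathfrak{A}}$; $C(X,\mathbb{C}1_{\mathfrak{A}})$ is the subalgebra of functions with values in $\mathbb{C}1_{\mathfrak{A}}$. For $a\in C(X,\mathfrak{A})$, $l^{(\mathsf{n})}_{\mathsf{d}_X}(a)=\sup_{x\ne y}\|a(x)-a(y)\|_{\mathsf{n}}/\mathsf{d}_X(x,y)$, and $\mathsf{L}^{(\mathsf{n}),C(X)}_{\mathsf{d}_X}(a)=\max\{l^{(\mathsf{n})}_{\mathsf{d}_X}(a),\inf_{b\in C(X,\mathbb{C}1_{\mathfrak{A}})}\|a-b\|\}$, $\mathsf{L}^{(\mathsf{n}),\mathbb{C}}_{\mathsf{d}_X}(a)=\max\{l^{(\mathsf{n})}_{\mathsf{d}_X}(a),\inf_{\lambda\in\mathbb{C}}\|a-\lambda1\|\}$, $\mathsf{L}^{(\mathsf{n}),\mu}_{\mathsf{d}_X}(a)=\max\{l^{(\mathsf{n})}_{\mathsf{d}_X}(a),\|a-\mu(a)1\|\}$, all norms being the supremum norm of $C(X,\mathfrak{A})$. *)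

(* Defs.v *)
From HB Require Import structures.
From mathcomp Require Import all_boot all_order all_algebra.
From mathcomp Require Import all_classical all_reals.
From mathcomp Require Import ereal.
From mathcomp.real_closed Require Import complex.
Import Order.TTheory GRing.Theory Num.Theory.

Set Implicit Arguments.
Unset Strict Implicit.
Unset Printing Implicit Defensive.

Local Open Scope ring_scope.
Local Open Scope classical_set_scope.
Local Open Scope complex_scope.
Local Open Scope ring_scope.

Definition is_metric (R : realType) (X : Type) (d : X -> X -> R) : Prop :=
  [/\ (forall x y, 0 <= d x y),
      (forall x y, d x y = 0 <-> x = y),
      (forall x y, d x y = d y x) &
      (forall x y z, d x z <= d x y + d y z)].

Definition d_open (R : realType) (X : Type) (d : X -> X -> R) (U : set X) : Prop :=
  forall x, U x -> exists2 r : R, 0 < r & forall y, d x y < r -> U y.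

Definition d_compact (R : realType) (X : Type) (d : X -> X -> R) : Prop :=
  forall (I : Type) (U : I -> set X),
    (forall i, d_open d (U i)) -> (forall x, exists i, U i x) ->
    exists (n : nat) (f : 'I_n -> I), forall x, exists k, U (f k) x.

Definition is_norm_C (R : realType) (A : algType R[i]) (nA : A -> R) : Prop :=
  [/\ (forall a, 0 <= nA a),
      (forall a, nA a = 0 -> a = 0),
      (forall a b, nA (a + b) <= nA a + nA b) &
      (forall (c : R[i]) a, (nA (c *: a))%:C = `|c| * (nA a)%:C)].

Definition is_complete (R : realType) (A : algType R[i]) (nA : A -> R) : Prop :=
  forall u : nat -> A,
    (forall e : R, 0 < e -> exists N, forall m n, (N <= m)%N -> (N <= n)%N ->
        nA (u m - u n) < e) ->
    exists l : A, forall e : R, 0 < e -> exists N, forall n, (N <= n)%N ->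
        nA (u n - l) < e.

Definition is_unital_Cstar (R : realType) (A : algType R[i])
    (star : A -> A) (nA : A -> R) : Prop :=
  [/\ is_norm_C nA,
      (forall a b, nA (a * b) <= nA a * nA b),
      is_complete nA,
      [/\ (forall a b, star (a + b) = star a + star b),
          (forall (c : R[i]) a, star (c *: a) = c^* *: star a),
          (forall a b, star (a * b) = star b * star a) &
          (forall a, star (star a) = a)] &
      (forall a, nA (star a * a) = nA a ^+ 2)].

(** A norm on A over R (real-homogeneous; complex norms are special cases)
    equivalent to the C*-norm. *)
Definition is_equiv_norm (R : realType) (A : algType R[i]) (nA nn : A -> R) : Prop :=
  [/\ (forall a, 0 <= nn a),
      (forall a, nn a = 0 -> a = 0),
      (forall a b, nn (a + b) <= nn a + nn b),
      (forall (r : R) a, nn (r%:C *: a) = `|r| * nn a) &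
      exists2 c1 : R, 0 < c1 & exists2 c2 : R, 0 < c2 &
        forall a, c1 * nA a <= nn a /\ nn a <= c2 * nA a].

Definition contf (R : realType) (X : Type) (d : X -> X -> R) (A : algType R[i])
    (nA : A -> R) (a : X -> A) : Prop :=
  forall x (e : R), 0 < e -> exists2 delta : R, 0 < delta &
    forall y, d x y < delta -> nA (a x - a y) < e.

Definition supnorm (R : realType) (X : Type) (A : algType R[i]) (nA : A -> R)
    (a : X -> A) : R := sup [set nA (a x) | x in [set: X]].


Definition is_state (R : realType) (X : Type) (d : X -> X -> R) (A : algType R[i])
    (star : A -> A) (nA : A -> R) (mu : (X -> A) -> R[i]) : Prop :=
  [/\ (forall a b, contf d nA a -> contf d nA b ->
          mu (fun x => a x + b x) = mu a + mu b),
      (forall (c : R[i]) a, contf d nA a -> mu (fun x => c *: a x) = c * mu a),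
      (forall a, contf d nA a -> 0 <= mu (fun x => star (a x) * a x)),
      (forall a, contf d nA a -> `|mu a| <= (supnorm nA a)%:C) &
      (forall e : R, 0 < e -> exists a, [/\ contf d nA a, supnorm nA a <= 1 &
          (1 - e)%:C < `|mu a|])].

Definition lip_n (R : realType) (X : Type) (d : X -> X -> R) (A : algType R[i])
    (nn : A -> R) (a : X -> A) : \bar R :=
  ereal_sup [set z : \bar R | exists x y, x <> y /\
                 z = ((nn (a x - a y)) / d x y)%:E].

Inductive qsel := q_CX | q_C | q_mu.

Definition qterm (R : realType) (X : Type) (d : X -> X -> R) (A : algType R[i])
    (nA : A -> R) (mu : (X -> A) -> R[i]) (q : qsel) (a : X -> A) : R :=
  match q with
  | q_CX => inf [set supnorm nA (fun x => a x - b x) | b in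
                  [set b : X -> A | contf d nA b /\
                     forall x, exists c : R[i], b x = c *: 1]]
  | q_C => inf [set supnorm nA (fun x => a x - c *: 1) | c in [set: R[i]]]
  | q_mu => supnorm nA (fun x => a x - mu a *: 1)
  end.

Definition Lq (R : realType) (X : Type) (d : X -> X -> R) (A : algType R[i])
    (nA nn : A -> R) (mu : (X -> A) -> R[i]) (q : qsel) (a : X -> A) : \bar R :=
  Order.max (lip_n d nn a) (qterm d nA mu q a)%:E.

Definition lsc_on_CXA (R : realType) (X : Type) (d : X -> X -> R) (A : algType R[i])
    (nA : A -> R) (L : (X -> A) -> \bar R) : Prop :=
  forall a, contf d nA a -> forall t : \bar R, (t < L a)%E ->
    exists2 delta : R, 0 < delta & forall b, contf d nA b ->
      supnorm nA (fun x => a x - b x) < delta -> (t < L b)%E.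

(* Main.v *)
Require Import Defs.
From HB Require Import structures.
From mathcomp Require Import all_boot all_order all_algebra.
From mathcomp Require Import all_classical all_reals.
From mathcomp Require Import ereal.
From mathcomp.real_closed Require Import complex.
From mathcomp Require Import ring lra.
Import Order.TTheory GRing.Theory Num.Theory.
Local Open Scope classical_set_scope.
Local Open Scope complex_scope.
Local Open Scope ring_scope.
Set Implicit Arguments.
Unset Strict Implicit.
Unset Printing Implicit Defensive.
Definition rsn (R : realType) (A : algType R[i]) (nm : A -> R) :=
  [/\ forall a, 0 <= nm a, forall a b, nm (a+b) <= nm a + nm b &
      forall (r : R) a, nm (r%:C *: a) = `|r| * nm a].

Lemma normC_real (R : realType) (r : R) : `|r%:C| = `|r|%:C.
Proof. by rewrite normc_def /= expr0n addr0 sqrtr_sqr. Qed.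

Lemma rsn_nA (R : realType) (A : algType R[i]) (nA : A -> R) :
  is_norm_C nA -> rsn nA.
Proof.
case=> h0 _ h2 h3; split => // r a; apply: complexI.
by rewrite h3 normC_real rmorphM.
Qed.

Lemma rsn_nn (R : realType) (A : algType R[i]) (nA nn : A -> R) :
  is_equiv_norm nA nn -> rsn nn.
Proof. by case=> h0 _ h2 h3 _; split. Qed.

Lemma rsn0 (R : realType) (A : algType R[i]) (nm : A -> R) :
  rsn nm -> nm 0 = 0.
Proof.
case=> _ _ h; have := h 0 0; rewrite scaler0 normr0 mul0r; exact.
Qed.

Lemma rsnN (R : realType) (A : algType R[i]) (nm : A -> R) a :
  rsn nm -> nm (- a) = nm a.
Proof.
case=> _ _ h; have := h (-1) a; rewrite rmorphN1 scaleN1r normrN normr1 mul1r; exact.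
Qed.

Lemma rsnB (R : realType) (A : algType R[i]) (nm : A -> R) a b :
  rsn nm -> nm (a - b) = nm (b - a).
Proof. by move=> h; rewrite -opprB rsnN. Qed.

Lemma rsn_tri3 (R : realType) (A : algType R[i]) (nm : A -> R) a b c :
  rsn nm -> nm (a - c) <= nm (a - b) + nm (b - c).
Proof.
case=> _ h _; have -> : a - c = (a - b) + (b - c) by rewrite addrA subrK.
exact: h.
Qed.

Lemma rsn_sum (R : realType) (A : algType R[i]) (nm : A -> R) n (F : 'I_n -> A) :
  rsn nm -> nm (\sum_(i < n) F i) <= \sum_(i < n) nm (F i).
Proof.
move=> hn; elim/big_rec2: _ => [|i y1 y2 _ IH]; first by rewrite rsn0.
case: hn => _ h _; apply: le_trans (h _ _) _; exact: lerD.
Qed.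

Lemma supnorm_ge0 (R : realType) (X : Type) (A : algType R[i]) (nA : A -> R)
  (f : X -> A) : (forall a, 0 <= nA a) -> 0 <= supnorm nA f.
Proof.
move=> h0; rewrite /supnorm.
have [hs|hs] := pselect (has_sup [set nA (f x) | x in [set: X]]).
  case: (hs) => -[_ [x _ _]] _; apply: le_trans (h0 (f x)) _.
  by apply: ub_le_sup; [case: hs|exists x].
by rewrite sup_out.
Qed.

Lemma supnorm_ub (R : realType) (X : Type) (A : algType R[i]) (nA : A -> R)
  (f : X -> A) x : (exists M, forall y, nA (f y) <= M) -> nA (f x) <= supnorm nA f.
Proof.
move=> [M hM]; apply: ub_le_sup; last by exists x.
by exists M => _ [y _ <-].
Qed.

Lemma supnorm_le (R : realType) (X : Type) (A : algType R[i]) (nA : A -> R)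
  (f : X -> A) M : 0 <= M -> (forall y, nA (f y) <= M) -> supnorm nA f <= M.
Proof.
move=> M0 hM; rewrite /supnorm.
have [ne|ne] := pselect ([set nA (f x) | x in [set: X]] !=set0).
  by apply: ge_sup => // _ [y _ <-].
suff -> : [set nA (f x) | x in [set: X]] = set0 by rewrite sup0.
by apply/seteqP; split => y Sy //; exfalso; apply: ne; exists y.
Qed.

Lemma supnorm_ext (R : realType) (X : Type) (A : algType R[i]) (nA : A -> R)
  (f g : X -> A) : (forall x, nA (f x) = nA (g x)) -> supnorm nA f = supnorm nA g.
Proof.
move=> h; rewrite /supnorm; congr sup.
by apply/seteqP; split => _ [x _ <-]; exists x => //.
Qed.

Lemma contf_sub (R : realType) (X : Type) (d : X -> X -> R) (A : algType R[i])
  (nA : A -> R) a b : rsn nA -> contf d nA a -> contf d nA b ->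
  contf d nA (fun x => a x - b x).
Proof.
move=> hn ca cb x e e0.
have e2 : 0 < e / 2 by rewrite divr_gt0.
have [d1 d10 h1] := ca x _ e2; have [d2 d20 h2] := cb x _ e2.
exists (Num.min d1 d2); first by rewrite lt_min d10 d20.
move=> y; rewrite lt_min => /andP[y1 y2].
have -> : a x - b x - (a y - b y) = (a x - a y) + (- (b x - b y)).
  by rewrite !opprD !opprK addrACA.
case: (hn) => _ htri _; apply: le_lt_trans (htri _ _) _.
rewrite rsnN // (splitr e); exact: ltrD (h1 _ y1) (h2 _ y2).
Qed.

Lemma contf_const (R : realType) (X : Type) (d : X -> X -> R) (A : algType R[i])
  (nA : A -> R) (c : A) : rsn nA -> contf d nA (fun _ => c).
Proof. by move=> hn x e e0; exists 1 => // y _; rewrite subrr rsn0. Qed.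

Lemma contf_lip (R : realType) (X : Type) (d : X -> X -> R) (A : algType R[i])
  (nA : A -> R) f K : is_metric d -> 0 <= K ->
  (forall x y, nA (f x - f y) <= K * d x y) -> contf d nA f.
Proof.
case=> d0 _ _ _ K0 h x e e0.
have K1 : 0 < K + 1 by rewrite ltr_wpDl.
exists (e / (K + 1)); first by rewrite divr_gt0.
move=> y hy; apply: le_lt_trans (h x y) _.
apply: le_lt_trans (_ : K * d x y <= (K + 1) * d x y) _.
  by rewrite ler_wpM2r // lerDl.
by rewrite mulrC -ltr_pdivlMr.
Qed.

Lemma cover_balls (R : realType) (X : Type) (d : X -> X -> R) (rho : X -> R) :
  is_metric d -> d_compact d -> (forall x, 0 < rho x) ->
  exists n (g : 'I_n -> X), forall y, exists k, d (g k) y < rho (g k).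
Proof.
case=> d0 deq dsym dtri dc rho0.
have := dc X (fun x => [set y | d x y < rho x]).
case.
- move=> x y /= hy; exists (rho x - d x y); first by rewrite subr_gt0.
  move=> z hz; apply: le_lt_trans (dtri x y z) _.
  by rewrite -ltrBrDl.
- by move=> x; exists x => /=; rewrite (proj2 (deq x x) erefl).
by move=> n [g hg]; exists n, g.
Qed.

Lemma contf_bounded (R : realType) (X : Type) (d : X -> X -> R) (A : algType R[i])
  (nA : A -> R) f : is_metric d -> d_compact d -> rsn nA -> contf d nA f ->
  exists M, forall x, nA (f x) <= M.
Proof.
move=> hm dc hn cf.
have : forall x, exists dl, 0 < dl /\ forall y, d x y < dl -> nA (f x - f y) < 1.
  by move=> x; have [dl ? ?] := cf x 1 ltr01; exists dl.
move=> /choice [delta hdelta].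
have [n [g hg]] := cover_balls hm dc (fun x => (hdelta x).1).
exists (\sum_(k < n) nA (f (g k)) + 1) => y.
have [k hk] := hg y.
have h1 := (hdelta (g k)).2 y hk.
have h2 : nA (f y) <= nA (f (g k)) + 1.
  case: (hn) => _ htri _.
  have -> : f y = f (g k) + - (f (g k) - f y) by rewrite opprB addrC subrK.
  apply: le_trans (htri _ _) _; rewrite rsnN //; exact: lerD (ltW h1).
apply: le_trans h2 _; rewrite lerD2r (bigD1 k) //= lerDl.
by apply: sumr_ge0 => i _; case: hn.
Qed.

Definition posp (R : realType) (u : R) := (u + `|u|) / 2.

Lemma posp_ge0 (R : realType) (u : R) : 0 <= posp u.
Proof.
have := ler_norm (- u); rewrite normrN => h.
rewrite /posp divr_ge0 //; lra.
Qed.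

Lemma posp_eq0 (R : realType) (u : R) : u <= 0 -> posp u = 0.
Proof. by move=> h; rewrite /posp ler0_norm // subrr mul0r. Qed.

Lemma posp_id (R : realType) (u : R) : 0 <= u -> posp u = u.
Proof. by move=> h; rewrite /posp ger0_norm //; field. Qed.

Lemma posp_lip (R : realType) (u v : R) : `|posp u - posp v| <= `|u - v|.
Proof.
rewrite /posp -mulrBl normrM (ger0_norm (_ : 0 <= 2^-1)) // ler_pdivrMr //.
rewrite opprD addrACA; apply: le_trans (ler_normD _ _) _.
by rewrite mulr_natr mulr2n lerD2l ler_dist_dist.
Qed.

Lemma alg_lip (R : realType) (P Q Sx Sy D m rho : R) : 0 < rho -> rho <= Sx -> rho <= Sy ->
  0 <= Q -> Q <= Sy -> `|P - Q| <= D -> `|Sx - Sy| <= m * D -> 0 <= m ->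
  `|P / Sx - Q / Sy| <= (1 + m) / rho * D.
Proof.
move=> r0 rx ry q0 qS hD hS m0.
have x0 : 0 < Sx by apply: lt_le_trans rx.
have y0 : 0 < Sy by apply: lt_le_trans ry.
have -> : P / Sx - Q / Sy = ((P - Q) + (Q / Sy) * (Sy - Sx)) / Sx.
  by field; rewrite ?gt_eqF.
have t0 : 0 <= Q / Sy by rewrite divr_ge0 // ltW.
have t1 : Q / Sy <= 1 by rewrite ler_pdivrMr // mul1r.
have D0 : 0 <= D by apply: le_trans (normr_ge0 _) hD.
have hN : `|(P - Q) + (Q / Sy) * (Sy - Sx)| <= (1 + m) * D.
  apply: le_trans (ler_normD _ _) _; rewrite mulrDl mul1r lerD //.
  rewrite normrM (ger0_norm t0) distrC.
  have n0 := normr_ge0 (Sx - Sy); nra.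
have xi : 0 <= Sx^-1 by rewrite invr_ge0 ltW.
rewrite normrM (ger0_norm xi) [X in _ <= X]mulrAC; apply: ler_pM => //.
by rewrite lef_pV2 ?posrE.
Qed.

Lemma conjCr (R : realType) (r : R) : (r%:C)^* = r%:C.
Proof. exact: conjc_real. Qed.

Lemma density (R : realType) (X : Type) (d : X -> X -> R) (A : algType R[i])
  (star : A -> A) (nA nn : A -> R) (a : X -> A) (e : R) :
  is_metric d -> d_compact d -> is_norm_C nA -> is_equiv_norm nA nn ->
  (forall u v, star (u + v) = star u + star v) ->
  (forall (c : R[i]) u, star (c *: u) = c^* *: star u) ->
  contf d nA a -> 0 < e ->
  exists b, [/\ contf d nA b, (exists L, forall x y, nn (b x - b y) <= L * d x y),
     (forall x, nA (a x - b x) <= e) &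
     ((forall x, star (a x) = a x) -> forall x, star (b x) = b x)].
Proof.
move=> hm dc hnC heq hsD hsZ ca e0.
have hnA := rsn_nA hnC; have hnn := rsn_nn heq.
have hm' := hm; case: hm' => d0 deq dsym dtri.
have : forall x, exists dl, 0 < dl /\ forall y, d x y < dl -> nA (a x - a y) < e.
  by move=> x; have [dl ? ?] := ca x e e0; exists dl.
move=> /choice [delta hdelta].
have hcov : forall x, 0 < delta x / 2.
  by move=> x; rewrite divr_gt0 //; case: (hdelta x).
have [n [g hg]] := cover_balls hm dc hcov.
pose r k := delta (g k).
have r0 : forall k, 0 < r k by move=> k; case: (hdelta (g k)).
pose phi k x := posp (r k - d (g k) x).
pose S x := \sum_(k < n) phi k x.
pose rho := (1 + \sum_(k < n) 2 / r k)^-1.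
have phi0 : forall k x, 0 <= phi k x by move=> k x; exact: posp_ge0.
have sum0 : 0 <= \sum_(k < n) 2 / r k.
  by apply: sumr_ge0 => k _; rewrite divr_ge0 // ltW.
have rho0 : 0 < rho by rewrite invr_gt0 ltr_wpDr.
have phiS : forall k x, phi k x <= S x.
  move=> k x; rewrite /S (bigD1 k) //= lerDl; exact: sumr_ge0.
have Sge : forall x, rho <= S x.
  move=> x; have [k hk] := hg x.
  suff : rho <= phi k x by move=> h; apply: le_trans h (phiS k x).
  have h1 : rho <= r k / 2.
    rewrite /rho -[r k / 2]invf_div lef_pV2 ?posrE ?divr_gt0 ?ltr_wpDr //.
    apply: le_trans (_ : 2 / r k <= \sum_(k < n) 2 / r k) _; last by rewrite lerDr.
    rewrite (bigD1 k) //= lerDl; apply: sumr_ge0 => i _; rewrite divr_ge0 //; exact: ltW.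
  apply: le_trans h1 _; have dd := d0 (g k) x.
  rewrite /phi /r in hk *; rewrite posp_id; lra.
have S0 : forall x, 0 < S x by move=> x; exact: lt_le_trans rho0 (Sge x).
pose w k x := phi k x / S x.
have w0 : forall k x, 0 <= w k x by move=> k x; rewrite divr_ge0 // ltW.
have wsum : forall x, \sum_(k < n) w k x = 1.
  by move=> x; rewrite /w -mulr_suml -/(S x) divff // gt_eqF.
pose b x := \sum_(k < n) (w k x)%:C *: a (g k).
have hA : forall x, nA (a x - b x) <= e.
  move=> x.
  have -> : a x - b x = \sum_(k < n) (w k x)%:C *: (a x - a (g k)).
    under eq_bigr => k _ do rewrite scalerBr.
    by rewrite sumrB -scaler_suml -rmorph_sum wsum rmorph1 scale1r.
  apply: le_trans (rsn_sum _ hnA) _.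
  rewrite -[e]mul1r -(wsum x) mulr_suml; apply: ler_sum => k _.
  case: (hnA) => _ _ hZ; rewrite hZ ger0_norm //.
  have [hk|hk] := ltP (d (g k) x) (r k).
    apply: ler_wpM2l => //; rewrite rsnB //; apply: ltW; exact: (hdelta (g k)).2.
  by rewrite /w /phi posp_eq0 ?mul0r // subr_le0.
have hphi : forall k x y, `|phi k x - phi k y| <= d x y.
  move=> k x y; apply: le_trans (posp_lip _ _) _.
  have := dtri (g k) x y; have := dtri (g k) y x; rewrite (dsym y x) => h1 h2.
  rewrite ler_norml; apply/andP; split; lra.
pose Lw := (1 + n%:R) / rho.
have hw : forall k x y, `|w k x - w k y| <= Lw * d x y.
  move=> k x y; apply: alg_lip => //.
  rewrite /S -sumrB; apply: le_trans (ler_norm_sum _ _ _) _.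
  apply: le_trans (ler_sum _ (fun k _ => hphi k x y)) _.
  by rewrite sumr_const card_ord mulr_natl.
pose L := Lw * \sum_(k < n) nn (a (g k)).
have L0 : 0 <= L.
  apply: mulr_ge0; first by rewrite divr_ge0 // ltW.
  by apply: sumr_ge0 => k _; case: hnn.
have hB : forall x y, nn (b x - b y) <= L * d x y.
  move=> x y.
  have -> : b x - b y = \sum_(k < n) (w k x - w k y)%:C *: a (g k).
    by rewrite /b -sumrB; apply: eq_bigr => k _; rewrite rmorphB scalerBl.
  apply: le_trans (rsn_sum _ hnn) _.
  rewrite /L mulrAC mulr_sumr; apply: ler_sum => k _.
  case: (hnn) => h0 _ hZ; rewrite hZ; apply: ler_wpM2r; [exact: h0| exact: hw].
exists b; split => //.
- case: (heq) => _ _ _ _ [c1 c10 [c2 c20 hc]].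
  apply: (@contf_lip _ _ _ _ _ _ (L / c1)) => //; first by rewrite divr_ge0 // ltW.
  move=> x y; rewrite mulrAC ler_pdivlMr // mulrC.
  apply: le_trans (proj1 (hc _)) (hB x y).
- by exists L.
- have star0 : star 0 = 0.
    by move: (hsD 0 0); rewrite addr0 -{1}[star 0]addr0 => /addrI.
  move=> hsa x; rewrite /b (big_morph star hsD star0); apply: eq_bigr => k _.
  by rewrite hsZ conjCr hsa.
Qed.

Lemma split3 (V : zmodType) (p q m n : V) : p - n = (p - q) + ((q - m) + (m - n)).
Proof. by rewrite (addrA (q - m)) subrK addrA subrK. Qed.

Lemma inf_lip (R : realType) (X : Type) (A : algType R[i]) (nA : A -> R)
  (I : Type) (P : set I) (h : I -> X -> A) (a b : X -> A) (s : R) :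
  rsn nA -> (exists i, P i) ->
  (forall i, P i -> exists M, forall x, nA (b x - h i x) <= M) ->
  (forall x, nA (a x - b x) <= s) -> 0 <= s ->
  inf [set supnorm nA (fun x => a x - h i x) | i in P] - s <=
  inf [set supnorm nA (fun x => b x - h i x) | i in P].
Proof.
move=> hn [i0 Pi0] hM hs s0.
have hn0 : forall u, 0 <= nA u by case: hn.
apply: lb_le_inf; first by exists (supnorm nA (fun x => b x - h i0 x)), i0.
move=> _ [i Pi <-]; rewrite lerBlDr.
have hlb : has_lbound [set supnorm nA (fun x => a x - h i x) | i in P].
  by exists 0 => _ [j _ <-]; apply: supnorm_ge0.
apply: le_trans (_ : _ <= supnorm nA (fun x => a x - h i x)) _.
  by apply: (ge_inf hlb); exists i.
apply: supnorm_le; first by rewrite addr_ge0 // supnorm_ge0.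
move=> y; apply: le_trans (rsn_tri3 _ (b y) _ hn) _.
rewrite addrC lerD //; exact: supnorm_ub (hM i Pi).
Qed.

Lemma qterm_lip (R : realType) (X : Type) (d : X -> X -> R) (A : algType R[i])
  (star : A -> A) (nA : A -> R) (mu : (X -> A) -> R[i]) (q : qsel) (a b : X -> A) :
  is_metric d -> d_compact d -> is_norm_C nA -> is_state d star nA mu ->
  contf d nA a -> contf d nA b ->
  qterm d nA mu q a - (1 + nA 1) * supnorm nA (fun x => a x - b x) <= qterm d nA mu q b.
Proof.
move=> hm dc hnC [hadd _ _ hbnd _] ca cb.
have hn := rsn_nA hnC; have hn0 : forall u, 0 <= nA u by case: hn.
set s := supnorm nA (fun x => a x - b x).
have s0 : 0 <= s by apply: supnorm_ge0.
have hs : forall x, nA (a x - b x) <= s.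
  move=> x; apply: supnorm_ub; apply: (contf_bounded hm dc hn).
  exact: contf_sub hn ca cb.
have K0 : 0 <= nA 1 * s by rewrite mulr_ge0.
have hsK : s <= (1 + nA 1) * s by rewrite mulrDl mul1r lerDl.
case: q => /=.
- apply: le_trans (inf_lip (h := fun b x => b x) hn _ _ hs s0).
  + by rewrite lerB.
  + exists (fun _ => 0 *: 1); split; first exact: contf_const.
    by move=> x; exists 0.
  + move=> c [cc _]; apply: (contf_bounded hm dc hn); exact: contf_sub hn cb cc.
- apply: le_trans (inf_lip (h := fun c x => c *: 1) hn _ _ hs s0).
  + by rewrite lerB.
  + by exists 0.
  + move=> c _; apply: (contf_bounded hm dc hn).
    exact: contf_sub cb (contf_const _ _ hn).
- rewrite lerBlDr.
  apply: supnorm_le.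
    by rewrite addr_ge0 // ?supnorm_ge0 // mulr_ge0 // addr_ge0.
  move=> y.
  have cbm : contf d nA (fun x => b x - mu b *: 1).
    exact: contf_sub cb (contf_const _ _ hn).
  have h1 := supnorm_ub y (contf_bounded hm dc hn cbm).
  have -> : a y - mu a *: 1 = (a y - b y) + ((b y - mu b *: 1) + (mu b - mu a) *: 1).
    by rewrite scalerBl (split3 _ (b y) (mu b *: 1)).
  case: (hn) => _ htri _.
  apply: le_trans (htri _ _) _; apply: le_trans (lerD (lexx _) (htri _ _)) _.
  have h3 : nA ((mu b - mu a) *: 1) <= nA 1 * s.
    case: hnC => _ _ _ hZ.
    rewrite -lecR hZ rmorphM /= mulrC; apply: ler_wpM2l; first by rewrite ler0c.
    have -> : mu b - mu a = mu (fun x => b x - a x).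
      have cba : contf d nA (fun x => b x - a x) by exact: contf_sub hn cb ca.
      have := hadd _ _ cba ca.
      have -> : (fun x => b x - a x + a x) = b by apply: funext => x; rewrite subrK.
      by move=> ->; rewrite addrK.
    apply: le_trans (hbnd _ (contf_sub hn cb ca)) _.
    rewrite lecR /s le_eqVlt; apply/orP; left; apply/eqP.
    by apply: supnorm_ext => x; rewrite rsnB.
  have := hs y; lra.
Qed.

Lemma lsc_part (R : realType) (X : Type) (d : X -> X -> R) (A : algType R[i])
  (star : A -> A) (nA nn : A -> R) (mu : (X -> A) -> R[i]) (q : qsel) :
  is_metric d -> d_compact d -> is_norm_C nA -> is_equiv_norm nA nn ->
  is_state d star nA mu -> lsc_on_CXA d nA (Lq d nA nn mu q).
Proof.
move=> hm dc hnC heq hst a ca t ht.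
have hn := rsn_nA hnC; have hnn := rsn_nn heq.
have hn0 : forall u, 0 <= nA u by case: hn.
have hm' := hm; case: hm' => d0 deq dsym dtri.
case: (heq) => _ _ _ _ [c1 c10 [c2 c20 hc]].
have hsb : forall b, contf d nA b -> forall x,
    nA (a x - b x) <= supnorm nA (fun x => a x - b x).
  move=> b cb x; apply: supnorm_ub; apply: (contf_bounded hm dc hn).
  exact: contf_sub hn ca cb.
case: t ht => [t0| |] ht; last first.
- exists 1 => // b _ _; rewrite /Lq lt_max; apply/orP; right; exact: ltNyr.
- by move: ht; rewrite ltNge leey.
rewrite /Lq lt_max in ht; case/orP: ht => ht.
- have [y [x1 [x2 [hne ->]]] ht'] := ereal_sup_gt ht.
  rewrite lte_fin in ht'.
  set D := d x1 x2.
  have D0 : 0 < D.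
    rewrite lt_neqAle d0 andbT eq_sym; apply/eqP => h.
    by apply: hne; apply/deq.
  set Na := nn (a x1 - a x2).
  set g := Na / D - t0.
  have g0 : 0 < g by rewrite subr_gt0.
  have hNa : Na = t0 * D + g * D by rewrite /g mulrBl divfK ?gt_eqF // addrC subrK.
  have gD : 0 < g * D by rewrite mulr_gt0.
  exists (g * D / (4 * c2)); first by rewrite divr_gt0 // mulr_gt0.
  move=> b cb hs.
  rewrite /Lq lt_max; apply/orP; left.
  apply: lt_le_trans (_ : t0%:E < (nn (b x1 - b x2) / D)%:E)%E _; last first.
    by apply: ereal_sup_ubound; exists x1, x2.
  rewrite lte_fin ltr_pdivlMr //.
  have hc2 : c2 * (g * D / (4 * c2)) = g * D / 4 by field; rewrite gt_eqF.
  have e1 : nn (a x1 - b x1) < g * D / 4.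
    apply: le_lt_trans (proj2 (hc _)) _; rewrite -hc2 ltr_pM2l //.
    exact: le_lt_trans (hsb b cb x1) hs.
  have e2 : nn (b x2 - a x2) < g * D / 4.
    rewrite rsnB //.
    apply: le_lt_trans (proj2 (hc _)) _; rewrite -hc2 ltr_pM2l //.
    exact: le_lt_trans (hsb b cb x2) hs.
  have t1 := rsn_tri3 (a x1) (b x1) (a x2) hnn.
  have t2 := rsn_tri3 (b x1) (b x2) (a x2) hnn.
  rewrite -/Na in t1; lra.
- rewrite lte_fin in ht.
  set qa := qterm d nA mu q a in ht.
  set K := 1 + nA 1.
  have K0 : 0 < K by rewrite ltr_pwDl.
  set g := qa - t0.
  have g0 : 0 < g by rewrite subr_gt0.
  exists (g / (2 * K)); first by rewrite divr_gt0 // mulr_gt0.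
  move=> b cb hs.
  rewrite /Lq lt_max; apply/orP; right; rewrite lte_fin.
  have := qterm_lip q hm dc hnC hst ca cb.
  have hK : K * supnorm nA (fun x => a x - b x) < g / 2.
    have -> : g / 2 = K * (g / (2 * K)) by field; rewrite gt_eqF.
    by rewrite ltr_pM2l.
  move=> h; rewrite /g /K /qa in hK ht h *; lra.
Qed.

Theorem lemma2p6 (R : realType) (X : Type) (d : X -> X -> R)
  (A : algType R[i]) (star : A -> A) (nA nn : A -> R)
  (mu : (X -> A) -> R[i]) (q : qsel) :
  is_metric d -> d_compact d ->
  is_unital_Cstar star nA ->
  is_state d star nA mu ->
  is_equiv_norm nA nn ->
  [/\ lsc_on_CXA d nA (Lq d nA nn mu q),
      (forall a, contf d nA a -> forall e : R, 0 < e ->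
         exists b, [/\ contf d nA b, (Lq d nA nn mu q b < +oo)%E &
                       supnorm nA (fun x => a x - b x) < e]) &
      (forall a, contf d nA a -> (forall x, star (a x) = a x) ->
         forall e : R, 0 < e ->
         exists b, [/\ contf d nA b, (forall x, star (b x) = b x),
                       (Lq d nA nn mu q b < +oo)%E &
                       supnorm nA (fun x => a x - b x) < e])].
Proof.
move=> hm dc hcs hst heq.
case: (hcs) => hnC _ _ [hsD hsZ _ _] _.
have hn := rsn_nA hnC.
have hm' := hm; case: hm' => d0 deq dsym dtri.
have fin : forall b, (exists L, forall x y, nn (b x - b y) <= L * d x y) ->
    (Lq d nA nn mu q b < +oo)%E.
  move=> b [L hL]; rewrite /Lq gt_max; apply/andP; split; last exact: ltry.
  apply: le_lt_trans (_ : _ <= L%:E)%E (ltry _).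
  apply: ge_ereal_sup => _ [x [y [hxy ->]]]; rewrite lee_fin.
  have D0 : 0 < d x y.
    rewrite lt_neqAle d0 andbT eq_sym; apply/eqP => h.
    by apply: hxy; apply/deq.
  by rewrite ler_pdivrMr // hL.
have e2 : forall e : R, 0 < e -> 0 < e / 2 by move=> e e0; rewrite divr_gt0.
have hsup : forall (a b : X -> A) (e : R), 0 < e ->
    (forall x, nA (a x - b x) <= e / 2) -> supnorm nA (fun x => a x - b x) < e.
  move=> a b e e0 h; apply: le_lt_trans (supnorm_le (ltW (e2 e e0)) h) _.
  by rewrite ltr_pdivrMr // ltr_pMr // ltr1n.
split.
- exact: (@lsc_part _ _ _ _ _ _ _ _ q hm dc hnC heq hst).
- move=> a ca e e0.
  have [b [cb hL hA _]] := density hm dc hnC heq hsD hsZ ca (e2 e e0).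
  by exists b; split => //; [exact: fin | exact: hsup].
- move=> a ca hsa e e0.
  have [b [cb hL hA hS]] := density hm dc hnC heq hsD hsZ ca (e2 e e0).
  by exists b; split => //; [exact: hS | exact: fin | exact: hsup].
Qed.
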